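(* Let $\alpha,\beta,\gamma,\sigma$ be integers with $\beta\geq\gamma>\sigma\geq 0$, $\alpha+\sigma\geq 2\gamma$, $\alpha+\beta+\sigma>3$, and suppose $\gamma<\beta$. Let $$G=\Bigl\langle a,b\,\Bigm|\, a^{2^{\alpha}}=b^{2^{\beta}}=[a,b,a]=[a,b,b]=e,\ a^{2^{\alpha+\sigma-\gamma}}=[a,b]^{2^{\sigma}}\Bigr\rangle.$$ Then $G$ is capable if and only if $\alpha=\beta$ and $\gamma<\beta-1$.
   Context: A group $G$ is called capable if there exists a group $K$ such that $K/Z(K)\cong G$. Commutators are $[x,y]=x^{-1}y^{-1}xy$, left-normed: $[x,y,z]=[[x,y],z]$. *)

(* Defs.v *)
(* abstract (possibly infinite) groups, since capability
   quantifies over arbitrary groups K. *)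
From Stdlib Require Import Arith.

Record Grp := {
  carrier :> Type;
  gmul : carrier -> carrier -> carrier;
  gone : carrier;
  ginv : carrier -> carrier;
  gmulA : forall x y z, gmul x (gmul y z) = gmul (gmul x y) z;
  gmul1l : forall x, gmul gone x = x;
  gmul1r : forall x, gmul x gone = x;
  gmulVl : forall x, gmul (ginv x) x = gone;
  gmulVr : forall x, gmul x (ginv x) = gone
}.

Arguments gmul {g} _ _.
Arguments gone {g}.
Arguments ginv {g} _.

Fixpoint gpow {G : Grp} (x : G) (n : nat) : G :=
  match n with
  | O => gone
  | S m => gmul x (gpow x m)
  end.

Definition comm {G : Grp} (x y : G) : G :=
  gmul (gmul (gmul (ginv x) (ginv y)) x) y.

Definition is_hom {G H : Grp} (f : G -> H) : Prop :=
  forall x y : G, f (gmul x y) = gmul (f x) (f y).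

Definition central {K : Grp} (k : K) : Prop :=
  forall h : K, gmul k h = gmul h k.

(* G is capable: there is a group K with K/Z(K) isomorphic to G, i.e. a
   surjective homomorphism K -> G whose kernel is exactly Z(K). *)
Definition capable (G : Grp) : Prop :=
  exists (K : Grp) (f : K -> G),
    is_hom f /\ (forall g : G, exists k : K, f k = g) /\
    (forall k : K, f k = gone <-> central k).

Definition rels (al be ga si : nat) {H : Grp} (x y : H) : Prop :=
  gpow x (2 ^ al) = gone /\
  gpow y (2 ^ be) = gone /\
  comm (comm x y) x = gone /\
  comm (comm x y) y = gone /\
  gpow x (2 ^ (al + si - ga)) = gpow (comm x y) (2 ^ si).

(* (G, a, b) is a presentation <a, b | rels>: a, b satisfy the relations and
   G has the universal property of the presented group. *)
Definition presents (al be ga si : nat) (G : Grp) (a b : G) : Prop :=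
  rels al be ga si a b /\
  forall (H : Grp) (x y : H), rels al be ga si x y ->
    exists f : G -> H, is_hom f /\ f a = x /\ f b = y /\
      forall g : G -> H, is_hom g -> g a = x -> g b = y -> forall z, g z = f z.

(* Main.v *)
Require Import Defs.
From Stdlib Require Import Arith Lia ZArith Eqdep_dec.
Set Warnings "-deprecated".
Local Infix "**" := gmul (at level 40, left associativity).


Section GrpLemmas.
Context {G : Grp}.
Implicit Types x y z w : G.

Lemma mulA x y z : x ** (y ** z) = x ** y ** z.
Proof. apply gmulA. Qed.
Lemma mul1l x : gone ** x = x. Proof. apply gmul1l. Qed.
Lemma mul1r x : x ** gone = x. Proof. apply gmul1r. Qed.
Lemma mulVl x : ginv x ** x = gone. Proof. apply gmulVl. Qed.
Lemma mulVr x : x ** ginv x = gone. Proof. apply gmulVr. Qed.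

Lemma mulKl x y : ginv x ** (x ** y) = y.
Proof. rewrite mulA, mulVl, mul1l. reflexivity. Qed.
Lemma mulKr x y : x ** (ginv x ** y) = y.
Proof. rewrite mulA, mulVr, mul1l. reflexivity. Qed.
Lemma mulKl' x y : y ** x ** ginv x = y.
Proof. rewrite <- mulA, mulVr, mul1r. reflexivity. Qed.
Lemma mulKr' x y : y ** ginv x ** x = y.
Proof. rewrite <- mulA, mulVl, mul1r. reflexivity. Qed.

Lemma mul_cancel_l x y z : x ** y = x ** z -> y = z.
Proof. intro H. rewrite <- (mulKl x y), H, mulKl. reflexivity. Qed.
Lemma mul_cancel_r x y z : y ** x = z ** x -> y = z.
Proof. intro H. rewrite <- (mulKl' x y), H, mulKl'. reflexivity. Qed.

Lemma inv_unique x y : x ** y = gone -> ginv x = y.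
Proof. intro H. apply (mul_cancel_l x). rewrite mulVr, H. reflexivity. Qed.
Lemma inv_inv x : ginv (ginv x) = x.
Proof. apply inv_unique. apply mulVl. Qed.
Lemma inv_one : ginv (@gone G) = gone.
Proof. apply inv_unique. apply mul1l. Qed.
Lemma inv_mul x y : ginv (x ** y) = ginv y ** ginv x.
Proof. apply inv_unique. rewrite mulA, <- (mulA x y), mulVr, mul1r, mulVr. reflexivity. Qed.

Lemma gpow_add x m n : gpow x (m + n) = gpow x m ** gpow x n.
Proof. induction m; simpl. now rewrite mul1l. now rewrite IHm, mulA. Qed.
Lemma gpow_mul x m n : gpow x (m * n) = gpow (gpow x m) n.
Proof.
  induction n; simpl. now rewrite Nat.mul_0_r.
  rewrite <- IHn. replace (m * S n) with (m + m * n) by lia. apply gpow_add.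
Qed.
Lemma gpow_one n : gpow (@gone G) n = gone.
Proof. induction n; simpl; auto. now rewrite IHn, mul1l. Qed.
Lemma gpow_1 x : gpow x 1 = x.
Proof. simpl. apply mul1r. Qed.
Lemma gpow_Sr x n : gpow x (S n) = gpow x n ** x.
Proof. replace (S n) with (n + 1) by lia. now rewrite gpow_add, gpow_1. Qed.

Definition commute x y := x ** y = y ** x.

Lemma commute_sym x y : commute x y -> commute y x.
Proof. unfold commute; auto. Qed.
Lemma commute_1 x : commute x gone.
Proof. unfold commute. now rewrite mul1l, mul1r. Qed.
Lemma commute_refl x : commute x x.
Proof. reflexivity. Qed.
Lemma commute_mul x y z : commute x y -> commute x z -> commute x (y ** z).
Proof. unfold commute; intros H1 H2. now rewrite mulA, H1, <- mulA, H2, mulA. Qed.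
Lemma commute_inv x y : commute x y -> commute x (ginv y).
Proof.
  unfold commute; intros H. apply (mul_cancel_l y). rewrite mulA, <- H, <- mulA, mulVr, mul1r, mulKr. reflexivity.
Qed.
Lemma commute_pow x y n : commute x y -> commute x (gpow y n).
Proof. intro H. induction n; simpl. apply commute_1. now apply commute_mul. Qed.
Lemma pow_mul_commute x y n : commute x y -> gpow (x ** y) n = gpow x n ** gpow y n.
Proof.
  intro H. induction n; simpl. now rewrite mul1l.
  rewrite IHn. assert (Hc : commute y (gpow x n)) by (apply commute_pow, commute_sym, H).
  rewrite <- !mulA. f_equal. rewrite !mulA. f_equal. exact Hc.
Qed.

Lemma comm_1 x y : comm x y = gone <-> commute x y.
Proof.
  unfold comm, commute. split; intro H.
  - assert (E : y ** x ** (ginv x ** ginv y ** x ** y) = x ** y).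
    { rewrite !mulA. rewrite mulKl'. rewrite mulVr, mul1l. reflexivity. }
    rewrite H, mul1r in E. auto.
  - rewrite <- (mulA _ x y), H, mulA, mulKr', mulVl. reflexivity.
Qed.

Lemma central_commute k : central k -> forall h, commute k h.
Proof. auto. Qed.

Lemma gpow_pow_one x n k : gpow x n = gone -> gpow x (n * k) = gone.
Proof. intro H. rewrite gpow_mul, H. apply gpow_one. Qed.

Lemma gpow_mod x n k : n <> 0 -> gpow x n = gone -> gpow x k = gpow x (k mod n).
Proof.
  intros Hn H. rewrite (Nat.div_mod k n Hn) at 1. rewrite gpow_add, gpow_pow_one, mul1l; auto.
Qed.

Lemma gpow_dvd_one x n m : gpow x n = gone -> Nat.divide n m -> gpow x m = gone.
Proof. intros H [k ->]. rewrite Nat.mul_comm. now apply gpow_pow_one. Qed.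

End GrpLemmas.

Section Hom.
Context {G H : Grp} (f : G -> H) (Hf : is_hom f).
Lemma hom_one : f gone = gone.
Proof.
  apply (mul_cancel_l (f gone)). rewrite <- Hf, !mul1r. reflexivity.
Qed.
Lemma hom_inv x : f (ginv x) = ginv (f x).
Proof. symmetry. apply inv_unique. rewrite <- Hf, mulVr. apply hom_one. Qed.
Lemma hom_pow x n : f (gpow x n) = gpow (f x) n.
Proof. induction n; simpl. apply hom_one. now rewrite Hf, IHn. Qed.
Lemma hom_comm x y : f (comm x y) = comm (f x) (f y).
Proof. unfold comm. now rewrite !Hf, !hom_inv. Qed.
End Hom.

Section CommChar.
Context {G : Grp}.
Lemma comm_charac (x y w : G) : x ** y = y ** x ** w -> comm x y = w.
Proof.
  intro H. unfold comm. rewrite <- (mulA _ x y), H, !mulA.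
  rewrite <- (mulA (ginv x) (ginv y) y), mulVl, mul1r, mulVl, mul1l. reflexivity.
Qed.
End CommChar.

Lemma swap_l {G : Grp} (p u v : G) : commute u v -> p ** u ** v = p ** v ** u.
Proof. intro H. rewrite <- mulA, H, mulA. reflexivity. Qed.
Ltac assoc_l := repeat rewrite mulA.

Section Class2.
Context {G : Grp}.
Variables a b : G.
Let c := comm a b.
Hypothesis Hca : commute c a.
Hypothesis Hcb : commute c b.

Lemma ab_swap : a ** b = b ** a ** c.
Proof.
  unfold c, comm. rewrite !mulA. rewrite mulKl'. rewrite mulVr, mul1l. reflexivity.
Qed.
Lemma cpow_a m i : commute (gpow c m) (gpow a i).
Proof. apply commute_sym, commute_pow, commute_sym, commute_pow, Hca. Qed.
Lemma cpow_b m j : commute (gpow c m) (gpow b j).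
Proof. apply commute_sym, commute_pow, commute_sym, commute_pow, Hcb. Qed.
Lemma c_bpow j : commute c (gpow b j).
Proof. pose proof (cpow_b 1 j) as H. rewrite gpow_1 in H. exact H. Qed.
Lemma c_apow i : commute c (gpow a i).
Proof. pose proof (cpow_a 1 i) as H. rewrite gpow_1 in H. exact H. Qed.
Lemma c_cpow m : commute c (gpow c m).
Proof. apply commute_pow, commute_refl. Qed.
Lemma a_bpow j : a ** gpow b j = gpow b j ** a ** gpow c j.
Proof.
  induction j. simpl. now rewrite mul1r, mul1l, mul1r.
  change (gpow b (S j)) with (b ** gpow b j). change (gpow c (S j)) with (c ** gpow c j).
  rewrite mulA, ab_swap, (swap_l _ _ _ (c_bpow j)), <- (mulA b a), IHj.
  assoc_l. apply swap_l. apply commute_sym, c_cpow.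
Qed.
Lemma apow_bpow i j : gpow a i ** gpow b j = gpow b j ** gpow a i ** gpow c (i * j).
Proof.
  induction i. simpl. now rewrite mul1l, mul1r, mul1r.
  change (gpow a (S i)) with (a ** gpow a i).
  rewrite <- mulA, IHi. assoc_l. rewrite a_bpow.
  rewrite (swap_l _ _ _ (cpow_a j i)).
  replace (S i * j) with (j + i * j) by lia. rewrite gpow_add. assoc_l. reflexivity.
Qed.
Lemma NF_mul g i k g' i' k' :
  gpow b g ** gpow a i ** gpow c k ** (gpow b g' ** gpow a i' ** gpow c k') =
  gpow b (g + g') ** gpow a (i + i') ** gpow c (i * g' + k + k').
Proof.
  rewrite !gpow_add. assoc_l.
  rewrite (swap_l _ _ _ (cpow_b k g')), (swap_l _ _ _ (cpow_a k i')).
  rewrite <- (mulA (gpow b g) (gpow a i)), apow_bpow. assoc_l.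
  rewrite (swap_l _ _ _ (cpow_a _ i')). reflexivity.
Qed.
End Class2.

Fixpoint tri (k : nat) : nat := match k with 0 => 0 | S k' => tri k' + k' end.
Lemma tri_2 k : 2 * tri k = k * (k - 1).
Proof. induction k; simpl tri. reflexivity. destruct k; simpl in *; lia. Qed.

Section Conj.
Context {K : Grp}.
Definition cj (u g : K) := ginv g ** u ** g.
Lemma cj_mul u v g : cj (u ** v) g = cj u g ** cj v g.
Proof. unfold cj. assoc_l. rewrite mulKl'. reflexivity. Qed.
Lemma cj_one g : cj gone g = gone.
Proof. unfold cj. rewrite mul1r, mulVl. reflexivity. Qed.
Lemma cj_pow u g k : cj (gpow u k) g = gpow (cj u g) k.
Proof. induction k; simpl. apply cj_one. rewrite cj_mul, IHk. reflexivity. Qed.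
Lemma cj_comm u g : cj u g = u ** comm u g.
Proof. unfold cj, comm. assoc_l. rewrite mulVr, mul1l. reflexivity. Qed.
Lemma comm_cj u g : comm u g = ginv u ** cj u g.
Proof. rewrite cj_comm, mulKl. reflexivity. Qed.
Lemma cj_cj u g h : cj u (g ** h) = cj (cj u g) h.
Proof. unfold cj. rewrite inv_mul. assoc_l. reflexivity. Qed.
Lemma cj_central u g : central u -> cj u g = u.
Proof. intro H. unfold cj. rewrite <- mulA, (H g), mulKl. reflexivity. Qed.
Lemma comm_pow_central (u g d : K) k : central d -> cj u g = u ** d -> comm (gpow u k) g = gpow d k.
Proof.
  intros Hd E. rewrite comm_cj, cj_pow, E, pow_mul_commute by (apply commute_sym, Hd).
  apply mulKl.
Qed.
Lemma comm_mul_central (u k g : K) : central k -> comm (u ** k) g = comm u g.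
Proof.
  intro Hk. rewrite !comm_cj, cj_mul, (cj_central k) by auto. rewrite inv_mul.
  rewrite <- mulA, (mulA (ginv u)). rewrite <- (Hk (ginv u ** cj u g)). rewrite mulA, <- (mulA (ginv k)).
  apply mulKl.
Qed.
Lemma central_pow (d : K) k : central d -> central (gpow d k).
Proof. intros H h. apply commute_sym, commute_pow, commute_sym, H. Qed.
End Conj.

Section Class3.
Context {K : Grp}.
Variables x y : K.
Let z := comm x y.
Let t := comm z x.
Let s := comm z y.
Hypothesis Ht : central t.
Hypothesis Hs : central s.

Lemma cj_pow_central (u g d : K) k : central d -> cj u g = u ** d -> cj u (gpow g k) = u ** gpow d k.
Proof.
  intros Hd E. induction k. unfold cj. simpl. rewrite inv_one, mul1l, !mul1r. reflexivity.
  change (gpow g (S k)) with (g ** gpow g k). rewrite cj_cj, E, cj_mul, IHk, cj_central by auto.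
  rewrite gpow_Sr. assoc_l. reflexivity.
Qed.
Lemma mul_cj (u g : K) : g ** cj u g = u ** g.
Proof. unfold cj. assoc_l. rewrite mulVr, mul1l. reflexivity. Qed.

Lemma F1 k : comm (gpow z k) x = gpow t k.
Proof. apply comm_pow_central; auto. apply cj_comm. Qed.
Lemma F2 k : comm (gpow z k) y = gpow s k.
Proof. apply comm_pow_central; auto. apply cj_comm. Qed.
Lemma zx_pow k : z ** gpow x k = gpow x k ** z ** gpow t k.
Proof.
  rewrite <- mul_cj, (cj_pow_central z x t k Ht (cj_comm z x)). assoc_l. reflexivity.
Qed.
Lemma xz_pow k : gpow (x ** z) k = gpow x k ** gpow z k ** gpow t (tri k).
Proof.
  induction k. simpl. rewrite !mul1l. reflexivity.
  change (gpow (x ** z) (S k)) with (x ** z ** gpow (x ** z) k). rewrite IHk.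
  assoc_l. rewrite <- (mulA x z), zx_pow. assoc_l.
  rewrite (swap_l _ _ _ (central_pow _ k Ht (gpow z k))).
  change (gpow x (S k)) with (x ** gpow x k). change (gpow z (S k)) with (z ** gpow z k).
  simpl tri. rewrite (gpow_add t). assoc_l.
  first [reflexivity |
  rewrite (swap_l _ _ _ (commute_pow _ _ (tri k) (commute_sym _ _ (commute_pow _ _ k (commute_refl t)))));
  reflexivity].
Qed.
Lemma F3 k : comm (gpow x k) y = gpow z k ** gpow t (tri k).
Proof.
  rewrite comm_cj, cj_pow, cj_comm. fold z. rewrite xz_pow. assoc_l. rewrite mulVl, mul1l. reflexivity.
Qed.
Lemma F4 k : comm x (gpow y k) = gpow z k ** gpow s (tri k).
Proof.
  assert (E : cj x (gpow y k) = x ** gpow z k ** gpow s (tri k)).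
  { induction k. unfold cj. simpl. rewrite inv_one, mul1l, !mul1r. reflexivity.
    change (gpow y (S k)) with (y ** gpow y k). rewrite cj_cj, (cj_comm x y). fold z.
    rewrite cj_mul, IHk, (cj_pow_central z y s k Hs (cj_comm z y)).
    simpl tri. rewrite gpow_add, gpow_Sr. assoc_l.
    rewrite (swap_l _ _ _ (central_pow _ (tri k) Hs z)). reflexivity. }
  rewrite comm_cj, E. assoc_l. rewrite mulVl, mul1l. reflexivity.
Qed.
End Class3.


Section NGrp.
Variables (T : Type) (eqd : forall x y : T, {x = y} + {x <> y}) (norm : T -> T)
  (mul : T -> T -> T) (one : T) (inv : T -> T).
Hypothesis idem : forall x, norm (norm x) = norm x.
Hypothesis cl : forall x y, norm (mul (norm x) y) = norm (mul x y).
Hypothesis cr : forall x y, norm (mul x (norm y)) = norm (mul x y).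
Hypothesis ci : forall x, norm (inv (norm x)) = norm (inv x).
Hypothesis assoc : forall x y z, mul x (mul y z) = mul (mul x y) z.
Hypothesis onel : forall x, norm (mul one x) = norm x.
Hypothesis oner : forall x, norm (mul x one) = norm x.
Hypothesis invl : forall x, norm (mul (inv x) x) = norm one.
Hypothesis invr : forall x, norm (mul x (inv x)) = norm one.

Definition ncarr := {x : T | norm x = x}.
Lemma ncarr_eq (u v : ncarr) : proj1_sig u = proj1_sig v -> u = v.
Proof.
  destruct u as [u Hu], v as [v Hv]; simpl. intros ->. f_equal. apply UIP_dec. exact eqd.
Qed.
Definition nmk (x : T) : ncarr := exist _ (norm x) (idem x).
Lemma nmk_eq x y : norm x = norm y -> nmk x = nmk y.
Proof. intro H. apply ncarr_eq. simpl. exact H. Qed.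
Lemma nmk_val (u : ncarr) : nmk (proj1_sig u) = u.
Proof. apply ncarr_eq. simpl. apply (proj2_sig u). Qed.
Definition nmul (u v : ncarr) : ncarr := nmk (mul (proj1_sig u) (proj1_sig v)).
Definition ninv (u : ncarr) : ncarr := nmk (inv (proj1_sig u)).
Definition none : ncarr := nmk one.

Lemma nmulA x y z : nmul x (nmul y z) = nmul (nmul x y) z.
Proof.
  apply nmk_eq. simpl. rewrite cr, cl. now rewrite assoc.
Qed.
Lemma nmul1l x : nmul none x = x.
Proof. rewrite <- (nmk_val x). apply nmk_eq. simpl. rewrite cl, onel, idem. reflexivity. Qed.
Lemma nmul1r x : nmul x none = x.
Proof. rewrite <- (nmk_val x). apply nmk_eq. simpl. rewrite cr, oner, idem. reflexivity. Qed.
Lemma nmulVl x : nmul (ninv x) x = none.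
Proof. apply nmk_eq. simpl. rewrite cl. apply invl. Qed.
Lemma nmulVr x : nmul x (ninv x) = none.
Proof. apply nmk_eq. simpl. rewrite cr. apply invr. Qed.

Definition NGrp : Grp := {| carrier := ncarr; gmul := nmul; gone := none; ginv := ninv;
  gmulA := nmulA; gmul1l := nmul1l; gmul1r := nmul1r; gmulVl := nmulVl; gmulVr := nmulVr |}.

Lemma nmk_mul x y : @gmul NGrp (nmk x) (nmk y) = nmk (mul x y).
Proof. apply nmk_eq. simpl. rewrite cl, cr. reflexivity. Qed.
Lemma nmk_inv x : @ginv NGrp (nmk x) = nmk (inv x).
Proof. apply nmk_eq. simpl. apply ci. Qed.
End NGrp.

Section Cyc.
Variable n : nat.
Hypothesis Hn : n <> 0.
Definition cnorm (j : nat) := j mod n.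
Definition cinv (j : nat) := n - j mod n.
Lemma c_idem x : cnorm (cnorm x) = cnorm x.
Proof. unfold cnorm. now apply Nat.Div0.mod_mod. Qed.
Lemma c_cl x y : cnorm (cnorm x + y) = cnorm (x + y).
Proof. unfold cnorm. now apply Nat.Div0.add_mod_idemp_l. Qed.
Lemma c_cr x y : cnorm (x + cnorm y) = cnorm (x + y).
Proof. unfold cnorm. now apply Nat.Div0.add_mod_idemp_r. Qed.
Lemma c_ci x : cnorm (cinv (cnorm x)) = cnorm (cinv x).
Proof. unfold cnorm, cinv. now rewrite Nat.Div0.mod_mod. Qed.
Lemma c_assoc x y z : x + (y + z) = x + y + z. Proof. lia. Qed.
Lemma c_onel x : cnorm (0 + x) = cnorm x. Proof. reflexivity. Qed.
Lemma c_oner x : cnorm (x + 0) = cnorm x. Proof. unfold cnorm. now rewrite Nat.add_0_r. Qed.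
Lemma c_invl x : cnorm (cinv x + x) = cnorm 0.
Proof.
  unfold cnorm, cinv. rewrite <- Nat.Div0.add_mod_idemp_r.
  assert (x mod n < n) by (apply Nat.mod_upper_bound; auto).
  replace (n - x mod n + x mod n) with n by lia. rewrite Nat.Div0.mod_same, Nat.Div0.mod_0_l. reflexivity.
Qed.
Lemma c_invr x : cnorm (x + cinv x) = cnorm 0.
Proof. rewrite Nat.add_comm. apply c_invl. Qed.
Definition Cyc : Grp := NGrp nat Nat.eq_dec cnorm plus 0 cinv c_idem c_cl c_cr c_assoc
  c_onel c_oner c_invl c_invr.
Definition cval (g : Cyc) : nat := proj1_sig g.
Lemma cval_mul (g h : Cyc) : cval (g ** h) = (cval g + cval h) mod n.
Proof. reflexivity. Qed.
Lemma cval_lt (g : Cyc) : cval g < n.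
Proof. destruct g as [g Hg]. unfold cval; simpl. rewrite <- Hg. unfold cnorm. apply Nat.mod_upper_bound; auto. Qed.
Lemma cval_one : cval (@gone Cyc) = 0.
Proof. unfold cval. simpl. unfold cnorm. apply Nat.Div0.mod_0_l. Qed.
Lemma cyc_eq (g h : Cyc) : cval g = cval h -> g = h.
Proof. apply ncarr_eq. exact Nat.eq_dec. Qed.
Definition cmk (j : nat) : Cyc := nmk nat cnorm c_idem j.
Lemma cval_mk j : cval (cmk j) = j mod n.
Proof. reflexivity. Qed.
Lemma cyc_comm (g h : Cyc) : g ** h = h ** g.
Proof. apply cyc_eq. rewrite !cval_mul. now rewrite Nat.add_comm. Qed.
Lemma cyc_pow j k : gpow (cmk j) k = cmk (k * j).
Proof.
  induction k. apply cyc_eq. reflexivity.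
  change (gpow (cmk j) (S k)) with (cmk j ** gpow (cmk j) k).
  rewrite IHk. apply cyc_eq. rewrite cval_mul, !cval_mk.
  rewrite <- Nat.Div0.add_mod. reflexivity.
Qed.
End Cyc.

Local Open Scope Z_scope.

Section Lat.
Variables N M P : Z.
Hypothesis HN : 0 < N.
Hypothesis HP : 0 < P.

Definition lnorm (u : Z * Z) : Z * Z :=
  (fst u mod N, (snd u + (fst u / N) * M) mod P).
Definition ladd (u v : Z * Z) : Z * Z := (fst u + fst v, snd u + snd v).
Definition lopp (u : Z * Z) : Z * Z := (- fst u, - snd u).
Definition Rl (u v : Z * Z) : Prop :=
  exists s t, fst u = fst v + s * N /\ snd u = snd v - s * M + t * P.

Lemma Rl_refl u : Rl u u.
Proof. exists 0, 0. lia. Qed.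
Lemma Rl_sym u v : Rl u v -> Rl v u.
Proof. intros (s & t & H1 & H2). exists (-s), (-t). lia. Qed.
Lemma Rl_trans u v w : Rl u v -> Rl v w -> Rl u w.
Proof. intros (s & t & H1 & H2) (s' & t' & H3 & H4). exists (s + s'), (t + t'). lia. Qed.
Lemma Rl_add u v u' v' : Rl u v -> Rl u' v' -> Rl (ladd u u') (ladd v v').
Proof. intros (s & t & H1 & H2) (s' & t' & H3 & H4). exists (s + s'), (t + t'). unfold ladd; simpl. lia. Qed.
Lemma Rl_opp u v : Rl u v -> Rl (lopp u) (lopp v).
Proof. intros (s & t & H1 & H2). exists (-s), (-t). unfold lopp; simpl. lia. Qed.
Lemma Rl_norm u : Rl u (lnorm u).
Proof.
  exists (fst u / N), ((snd u + (fst u / N) * M) / P). unfold lnorm; simpl. split.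
  - pose proof (Z.div_mod (fst u) N). lia.
  - pose proof (Z.div_mod (snd u + fst u / N * M) P). lia.
Qed.
Lemma Rl_norm_eq u v : Rl u v -> lnorm u = lnorm v.
Proof.
  intros (s & t & H1 & H2). destruct u as [u1 u2], v as [v1 v2]; simpl in *. subst.
  unfold lnorm; simpl. f_equal.
  - rewrite Z.mod_add; lia.
  - rewrite Z.div_add by lia.
    replace (v2 - s * M + t * P + (v1 / N + s) * M) with (v2 + v1 / N * M + t * P) by ring.
    rewrite Z.mod_add; lia.
Qed.
Lemma norm_eq_Rl u v : lnorm u = lnorm v -> Rl u v.
Proof.
  intro H. apply Rl_trans with (lnorm u). apply Rl_norm. rewrite H. apply Rl_sym, Rl_norm.
Qed.
Lemma l_idem x : lnorm (lnorm x) = lnorm x.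
Proof. apply Rl_norm_eq, Rl_sym, Rl_norm. Qed.
Lemma l_cl x y : lnorm (ladd (lnorm x) y) = lnorm (ladd x y).
Proof. apply Rl_norm_eq, Rl_add. apply Rl_sym, Rl_norm. apply Rl_refl. Qed.
Lemma l_cr x y : lnorm (ladd x (lnorm y)) = lnorm (ladd x y).
Proof. apply Rl_norm_eq, Rl_add. apply Rl_refl. apply Rl_sym, Rl_norm. Qed.
Lemma l_ci x : lnorm (lopp (lnorm x)) = lnorm (lopp x).
Proof. apply Rl_norm_eq, Rl_opp. apply Rl_sym, Rl_norm. Qed.
Lemma l_assoc x y z : ladd x (ladd y z) = ladd (ladd x y) z.
Proof. unfold ladd; simpl. f_equal; ring. Qed.
Lemma l_onel x : lnorm (ladd (0,0) x) = lnorm x.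
Proof. unfold ladd; simpl. now destruct x. Qed.
Lemma l_oner x : lnorm (ladd x (0,0)) = lnorm x.
Proof. unfold ladd; simpl. destruct x; simpl. now rewrite !Z.add_0_r. Qed.
Lemma l_invl x : lnorm (ladd (lopp x) x) = lnorm (0,0).
Proof. unfold ladd, lopp; simpl. f_equal; f_equal; ring. Qed.
Lemma l_invr x : lnorm (ladd x (lopp x)) = lnorm (0,0).
Proof. unfold ladd, lopp; simpl. f_equal; f_equal; ring. Qed.
Definition zz_dec (x y : Z * Z) : {x = y} + {x <> y}.
Proof. decide equality; apply Z.eq_dec. Defined.

Definition Lat : Grp := NGrp (Z*Z) zz_dec lnorm ladd (0,0) lopp l_idem l_cl l_cr l_assoc
  l_onel l_oner l_invl l_invr.
Definition lmk (u : Z * Z) : Lat := nmk (Z*Z) lnorm l_idem u.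
Definition lval (w : Lat) : Z * Z := proj1_sig w.
Lemma lmk_mul u v : lmk u ** lmk v = lmk (ladd u v).
Proof. exact (nmk_mul (Z*Z) zz_dec lnorm ladd (0,0) lopp l_idem l_cl l_cr l_assoc l_onel l_oner l_invl l_invr u v). Qed.
Lemma lmk_inv u : ginv (lmk u) = lmk (lopp u).
Proof. exact (nmk_inv (Z*Z) zz_dec lnorm ladd (0,0) lopp l_idem l_cl l_cr l_ci l_assoc l_onel l_oner l_invl l_invr u). Qed.
Lemma lone : (gone : Lat) = lmk (0,0).
Proof. reflexivity. Qed.
Lemma lmk_eq u v : Rl u v -> lmk u = lmk v.
Proof. intro H. apply (nmk_eq (Z*Z) zz_dec lnorm l_idem). now apply Rl_norm_eq. Qed.
Lemma lmk_eq_inv u v : lmk u = lmk v -> Rl u v.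
Proof. intro H. apply norm_eq_Rl. apply (f_equal lval) in H. exact H. Qed.
Lemma lmk_val (w : Lat) : lmk (lval w) = w.
Proof. apply (nmk_val (Z*Z) zz_dec lnorm l_idem). Qed.
Lemma lval_mk u : lval (lmk u) = lnorm u.
Proof. reflexivity. Qed.
Lemma lval_nonneg (w : Lat) : 0 <= fst (lval w) /\ 0 <= snd (lval w).
Proof.
  rewrite <- (lmk_val w), lval_mk. unfold lnorm; simpl.
  split; apply Z.mod_pos_bound; auto.
Qed.
Lemma lat_comm (u v : Lat) : u ** v = v ** u.
Proof.
  rewrite <- (lmk_val u), <- (lmk_val v), !lmk_mul. f_equal. unfold ladd. f_equal; ring.
Qed.
Lemma lat_pow u k : gpow (lmk u) k = lmk (Z.of_nat k * fst u, Z.of_nat k * snd u).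
Proof.
  induction k. change (gpow (lmk u) 0) with (@gone Lat). rewrite lone.
  apply lmk_eq. exists 0, 0. simpl. lia.
  change (gpow (lmk u) (S k)) with (lmk u ** gpow (lmk u) k). rewrite IHk, lmk_mul.
  apply lmk_eq. exists 0, 0. unfold ladd; cbn [fst snd]. rewrite Nat2Z.inj_succ. split; ring.
Qed.
Lemma Rl_T (e : Z) : N = e * P -> forall u v, Rl u v ->
  Rl (fst u, snd u + fst u) (fst v, snd v + fst v).
Proof.
  intros HNe u v (s & t & H1 & H2). exists s, (t + s * e). simpl. rewrite HNe in *. split. lia.
  rewrite H1, H2. ring.
Qed.
Lemma Rl_addP p q k : Rl (p, q + k * P) (p, q).
Proof. exists 0, k. simpl. lia. Qed.
Lemma Rl_iff0 u v : Rl u v <-> Rl (fst u - fst v, snd u - snd v) (0, 0).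
Proof.
  split; intros (s & t & H1 & H2); exists s, t; simpl in *; lia.
Qed.
End Lat.

Local Close Scope Z_scope.

Section Prod.
Variables A B : Grp.
Definition pmul (x y : A * B) : A * B := (fst x ** fst y, snd x ** snd y).
Definition pinv (x : A * B) : A * B := (ginv (fst x), ginv (snd x)).
Lemma pmulA x y z : pmul x (pmul y z) = pmul (pmul x y) z.
Proof. unfold pmul; simpl. now rewrite !mulA. Qed.
Lemma pmul1l x : pmul (gone, gone) x = x.
Proof. destruct x; unfold pmul; simpl. now rewrite !mul1l. Qed.
Lemma pmul1r x : pmul x (gone, gone) = x.
Proof. destruct x; unfold pmul; simpl. now rewrite !mul1r. Qed.
Lemma pmulVl x : pmul (pinv x) x = (gone, gone).
Proof. destruct x; unfold pmul; simpl. now rewrite !mulVl. Qed.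
Lemma pmulVr x : pmul x (pinv x) = (gone, gone).
Proof. destruct x; unfold pmul; simpl. now rewrite !mulVr. Qed.
Definition Prod : Grp := {| carrier := (A * B)%type; gmul := pmul; gone := (gone, gone); ginv := pinv;
  gmulA := pmulA; gmul1l := pmul1l; gmul1r := pmul1r; gmulVl := pmulVl; gmulVr := pmulVr |}.
End Prod.

Section SD.
Variable n : nat.
Hypothesis Hn : n <> 0.
Variable A : Grp.
Variable phi : A -> A.
Hypothesis Hphi : is_hom phi.
Hypothesis Hper : forall w, Nat.iter n phi w = w.

Definition ph (k : nat) (w : A) : A := Nat.iter k phi w.
Lemma ph_add a b w : ph (a + b) w = ph a (ph b w).
Proof. unfold ph. apply Nat.iter_add. Qed.
Lemma ph_0 w : ph 0 w = w. Proof. reflexivity. Qed.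
Lemma ph_S k w : ph (S k) w = phi (ph k w). Proof. reflexivity. Qed.
Lemma ph_hom k : is_hom (ph k).
Proof. induction k; intros u v. reflexivity. rewrite !ph_S, IHk. apply Hphi. Qed.
Lemma ph_one k : ph k gone = gone.
Proof. apply hom_one, ph_hom. Qed.
Lemma ph_inv k w : ph k (ginv w) = ginv (ph k w).
Proof. apply hom_inv, ph_hom. Qed.
Lemma ph_nq q w : ph (n * q) w = w.
Proof.
  induction q. rewrite Nat.mul_0_r. reflexivity.
  replace (n * S q) with (n + n * q) by lia. rewrite ph_add, IHq. apply Hper.
Qed.
Lemma ph_mod k w : ph (k mod n) w = ph k w.
Proof.
  rewrite (Nat.div_mod k n Hn) at 2. rewrite Nat.add_comm, ph_add, ph_nq. reflexivity.
Qed.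

Notation Cn := (Cyc n Hn).
Definition sdmul (x y : Cn * A) : Cn * A :=
  (fst x ** fst y, ph (cval n Hn (fst y)) (snd x) ** snd y).
Definition sdinv (x : Cn * A) : Cn * A :=
  (ginv (fst x), ginv (ph (cval n Hn (ginv (fst x))) (snd x))).
Lemma sdmulA x y z : sdmul x (sdmul y z) = sdmul (sdmul x y) z.
Proof.
  destruct x as [g w], y as [g' w'], z as [g'' w'']; unfold sdmul; cbn [fst snd]. f_equal.
  apply mulA. rewrite cval_mul, ph_mod, (ph_hom _ _ w'), <- ph_add, Nat.add_comm. apply mulA.
Qed.
Lemma sdmul1l x : sdmul (gone, gone) x = x.
Proof. destruct x as [g w]; unfold sdmul; cbn [fst snd]. rewrite ph_one. f_equal; apply mul1l. Qed.
Lemma sdmul1r x : sdmul x (gone, gone) = x.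
Proof. destruct x as [g w]; unfold sdmul; cbn [fst snd]. rewrite cval_one, ph_0. f_equal; apply mul1r. Qed.
Lemma sdmulVl x : sdmul (sdinv x) x = (gone, gone).
Proof.
  destruct x as [g w]; unfold sdmul, sdinv; cbn [fst snd]. f_equal. apply mulVl.
  rewrite ph_inv, <- ph_add, <- ph_mod.
  assert (E : (cval n Hn g + cval n Hn (ginv g)) mod n = 0).
  { rewrite <- cval_mul, mulVr. apply cval_one. }
  rewrite E, ph_0. apply mulVl.
Qed.
Lemma sdmulVr x : sdmul x (sdinv x) = (gone, gone).
Proof. destruct x as [g w]; unfold sdmul, sdinv; cbn [fst snd]. f_equal; apply mulVr. Qed.
Definition SD : Grp := {| carrier := (Cn * A)%type; gmul := sdmul; gone := (gone, gone); ginv := sdinv;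
  gmulA := sdmulA; gmul1l := sdmul1l; gmul1r := sdmul1r; gmulVl := sdmulVl; gmulVr := sdmulVr |}.

Lemma sd_mul_def (g g' : Cn) (w w' : A) :
  @gmul SD (g, w) (g', w') = (g ** g', ph (cval n Hn g') w ** w').
Proof. reflexivity. Qed.
Definition iA (u : A) : SD := (gone, u).
Definition iC (g : Cn) : SD := (g, gone).
Lemma iA_hom : is_hom iA.
Proof. intros u v. unfold iA. rewrite sd_mul_def, cval_one, ph_0, mul1l. reflexivity. Qed.
Lemma iC_hom : is_hom iC.
Proof. intros u v. unfold iC. rewrite sd_mul_def, ph_one, mul1l. reflexivity. Qed.
Lemma sd_CA (g : Cn) (v : A) : @gmul SD (iC g) (iA v) = (g, v).
Proof. unfold iC, iA. rewrite sd_mul_def, cval_one, ph_0, mul1l, mul1r. reflexivity. Qed.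
Lemma sd_xA (g : Cn) (w v : A) : @gmul SD (g, w) (iA v) = (g, w ** v).
Proof. unfold iA. rewrite sd_mul_def, cval_one, ph_0, mul1r. reflexivity. Qed.
Lemma sd_comm_AC (u : A) (g : Cn) : comm (iA u) (iC g) = iA (ginv u ** ph (cval n Hn g) u).
Proof.
  apply comm_charac. unfold iA, iC. rewrite !sd_mul_def, cval_one, ph_0, ph_one, !mul1l, !mul1r.
  rewrite mulKr. reflexivity.
Qed.
End SD.

Section SDmap.
Variable n : nat.
Hypothesis Hn : n <> 0.
Variables A A' : Grp.
Variables (phi : A -> A) (phi' : A' -> A').
Hypothesis Hphi : is_hom phi.
Hypothesis Hper : forall w, Nat.iter n phi w = w.
Hypothesis Hphi' : is_hom phi'.
Hypothesis Hper' : forall w, Nat.iter n phi' w = w.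
Variable rho : A -> A'.
Hypothesis Hrho : is_hom rho.
Hypothesis Hcomm : forall w, rho (phi w) = phi' (rho w).
Definition sdmap (x : SD n Hn A phi Hphi Hper) : SD n Hn A' phi' Hphi' Hper' := (fst x, rho (snd x)).
Lemma rho_ph k w : rho (ph A phi k w) = ph A' phi' k (rho w).
Proof. induction k. reflexivity. rewrite !ph_S, Hcomm, IHk. reflexivity. Qed.
Lemma sdmap_hom : is_hom sdmap.
Proof.
  intros [g w] [g' w']. unfold sdmap. simpl fst; simpl snd.
  rewrite !sd_mul_def. simpl. rewrite Hrho, rho_ph. reflexivity.
Qed.
End SDmap.

Lemma pow2_posZ k : (0 < Z.of_nat (2 ^ k))%Z.
Proof. pose proof (Nat.pow_nonzero 2 k). lia. Qed.
Lemma pow2_nz k : 2 ^ k <> 0.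
Proof. apply Nat.pow_nonzero. lia. Qed.
Lemma pow2_splitZ a b : Z.of_nat (2 ^ (a + b)) = (Z.of_nat (2 ^ a) * Z.of_nat (2 ^ b))%Z.
Proof. rewrite Nat.pow_add_r. apply Nat2Z.inj_mul. Qed.
Lemma pow2_split a b c : a = b + c -> Z.of_nat (2 ^ a) = (Z.of_nat (2 ^ c) * Z.of_nat (2 ^ b))%Z.
Proof. intros ->. rewrite pow2_splitZ. ring. Qed.

Lemma pow_dvd e1 e2 : e1 <= e2 -> Nat.divide (2 ^ e1) (2 ^ e2).
Proof. intro H. exists (2 ^ (e2 - e1)). rewrite <- Nat.pow_add_r. f_equal. lia. Qed.
Lemma tri_pow2 e : 1 <= e -> tri (2 ^ e) = 2 ^ (e - 1) * (2 ^ e - 1).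
Proof.
  intro H. apply (Nat.mul_cancel_l _ _ 2). lia. rewrite tri_2.
  replace (2 ^ e) with (2 * 2 ^ (e - 1)) by (rewrite <- Nat.pow_succ_r'; f_equal; lia).
  rewrite Nat.mul_assoc. reflexivity.
Qed.
Lemma pow_dvd_mul e1 e2 m : e1 <= e2 -> Nat.divide (2 ^ e1) (2 ^ e2 * m).
Proof. intro H. apply Nat.divide_mul_l, pow_dvd, H. Qed.

Section Arith.
Local Open Scope Z_scope.

Lemma pow2_div_odd (e : nat) (s u : Z) : Z.odd u = true ->
  (Z.of_nat (2 ^ e) | s * u) -> (Z.of_nat (2 ^ e) | s).
Proof.
  revert s. induction e; intros s Hu Hd.
  - simpl. apply Z.divide_1_l.
  - rewrite Nat.pow_succ_r', Nat2Z.inj_mul in *. simpl (Z.of_nat 2) in *.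
    destruct Hd as [k Hk].
    assert (Hs : Z.odd s = false).
    { destruct (Z.odd s) eqn:E; auto.
      assert (Z.odd (s * u) = true) by (rewrite Z.odd_mul, E, Hu; reflexivity).
      rewrite Hk in H. replace (k * (2 * Z.of_nat (2 ^ e))) with (0 + 2 * (k * Z.of_nat (2 ^ e))) in H by ring.
      rewrite Z.odd_add_mul_2 in H. discriminate. }
    assert (Z.even s = true) by (rewrite <- Z.negb_odd, Hs; reflexivity).
    apply Z.even_spec in H as [s' ->].
    assert (Hd : (Z.of_nat (2 ^ e) | s' * u)) by (exists k; lia).
    destruct (IHe s' Hu Hd) as [m ->]. exists m. ring.
Qed.


Lemma AX0 (A X : Z) : 0 < A -> 0 <= A * X < A -> A * X = 0.
Proof.
  intros HA [H1 H2]. assert (0 <= X) by (apply (Z.mul_nonneg_cancel_l A); lia).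
  assert (X < 1) by (apply (Z.mul_lt_mono_pos_l A); lia). assert (X = 0) by lia. subst. ring.
Qed.
Lemma NT_case1 (M D n2 N P A s t g T : Z) : 0 < M -> 0 < D -> P = D * M -> N = 2 * n2 * P -> A = D * N ->
  g = s * N -> 2 * T = g * (g - 1) -> T = - s * M + t * P -> 0 <= g < A -> g = 0.
Proof.
  intros HM HD HP HN HA Hg H2 HT Hr.
  assert (E0 : 2 * (- s * M + t * P) = 2 * (n2 * P * (s * (s * N - 1)))).
  { rewrite <- HT, H2, Hg. rewrite HN at 1. ring. }
  assert (E1 : - s * M + t * P = n2 * P * (s * (s * N - 1))) by lia.
  assert (E : M * s = M * (D * (t - n2 * (s * (s * N - 1))))).
  { rewrite HP in E1. lia. }
  apply Z.mul_cancel_l in E; [|lia].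
  remember (t - n2 * (s * (s * N - 1))) as X eqn:HX. clear HX.
  assert (Hg2 : g = A * X) by (rewrite Hg, HA, E; ring).
  rewrite Hg2 in *. apply AX0; lia.
Qed.

Lemma NT_case2 (M D D4 N P A s t g T : Z) : 0 < M -> 0 < D4 -> D = 4 * D4 -> P = D * M -> N = P -> A = D * N ->
  g = s * N -> 2 * T = g * (g - 1) -> T = - s * M + t * P -> 0 <= g < A ->
  (forall s u, Z.odd u = true -> (D | s * u) -> (D | s)) -> g = 0.
Proof.
  intros HM HD4 HD HP HN HA Hg H2 HT Hr Hodd.
  assert (E0 : 2 * (- s * M + t * P) = s * P * (s * P - 1)).
  { rewrite <- HT, H2, Hg, HN. ring. }
  rewrite HP in E0.
  assert (E : M * (s * D * (s * P - 1) + 2 * s - 2 * t * D) = 0) by (rewrite <- HP in E0; lia).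
  apply Z.mul_eq_0 in E as [E|E]; [lia|].
  assert (E3 : s * (1 + 2 * (D4 * (s * P - 1))) = t * D) by (rewrite HD in E |- *; lia).
  assert (Hu : Z.odd (1 + 2 * (D4 * (s * P - 1))) = true) by (rewrite Z.odd_add_mul_2; reflexivity).
  destruct (Hodd s _ Hu) as [m Hm]. exists t. lia.
  assert (Hg2 : g = A * m) by (rewrite Hg, HA, Hm, HN; ring).
  rewrite Hg2 in *. apply AX0; lia.
Qed.
End Arith.

Section Model.
Variables al be ga si : nat.
Hypothesis Hsg : si < ga.
Hypothesis Hag : 2 * ga <= al + si.
Hypothesis Hgb : ga < be.

Definition NZ := Z.of_nat (2 ^ (al + si - ga)).
Definition MZ := Z.of_nat (2 ^ si).
Definition PZ := Z.of_nat (2 ^ ga).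
Definition DZ := Z.of_nat (2 ^ (ga - si)).
Definition HNQ := pow2_posZ (al + si - ga).
Definition HPQ := pow2_posZ ga.
Lemma NZ_P : NZ = (Z.of_nat (2 ^ (al + si - 2 * ga)) * PZ)%Z.
Proof. apply pow2_split. lia. Qed.
Lemma PZ_M : PZ = (DZ * MZ)%Z.
Proof. apply pow2_split. lia. Qed.
Lemma al_N : Z.of_nat (2 ^ al) = (DZ * NZ)%Z.
Proof. apply pow2_split. lia. Qed.
Lemma be_P : Z.of_nat (2 ^ be) = (Z.of_nat (2 ^ (be - ga)) * PZ)%Z.
Proof. apply pow2_split. lia. Qed.

Notation LQ := (Lat NZ MZ PZ HNQ HPQ).
Definition lq (u : Z * Z) : LQ := lmk NZ MZ PZ HNQ HPQ u.
Definition lv (w : LQ) : Z * Z := lval NZ MZ PZ HNQ HPQ w.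
Lemma lq_val w : lq (lv w) = w.
Proof. apply lmk_val. Qed.
Lemma lq_mul u v : lq u ** lq v = lq (ladd u v).
Proof. apply lmk_mul. Qed.
Lemma lq_eq u v : Rl NZ MZ PZ u v -> lq u = lq v.
Proof. apply lmk_eq. Qed.

Definition phiQ (w : LQ) : LQ := lq (fst (lv w), (snd (lv w) + fst (lv w))%Z).
Lemma phiQ_mk u : phiQ (lq u) = lq (fst u, (snd u + fst u)%Z).
Proof.
  unfold phiQ. apply lq_eq. eapply (Rl_T NZ MZ PZ HNQ); [exact NZ_P|]. apply Rl_sym, Rl_norm; apply pow2_posZ.
Qed.
Lemma phiQ_hom : is_hom phiQ.
Proof.
  intros w w'. rewrite <- (lq_val w), <- (lq_val w'), lq_mul, !phiQ_mk, lq_mul.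
  f_equal. unfold ladd; simpl. f_equal. ring.
Qed.
Lemma phQ u k : ph LQ phiQ k (lq u) = lq (fst u, (snd u + Z.of_nat k * fst u)%Z).
Proof.
  induction k. simpl. f_equal. destruct u; simpl. f_equal. ring.
  rewrite ph_S, IHk, phiQ_mk. cbn [fst snd]. f_equal. f_equal. rewrite Nat2Z.inj_succ. ring.
Qed.
Lemma phiQ_per w : Nat.iter (2 ^ be) phiQ w = w.
Proof.
  rewrite <- (lq_val w). change (Nat.iter (2 ^ be) phiQ (lq (lv w))) with (ph LQ phiQ (2 ^ be) (lq (lv w))).
  rewrite phQ. apply lq_eq. destruct (lv w) as [p q]; simpl.
  rewrite be_P. exists 0%Z, (Z.of_nat (2 ^ (be - ga)) * p)%Z. simpl. lia.
Qed.

Notation Q := (SD (2 ^ be) (pow2_nz be) LQ phiQ phiQ_hom phiQ_per).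
Definition xQ := iA (2 ^ be) (pow2_nz be) LQ phiQ phiQ_hom phiQ_per (lq (1, 0)%Z).
Definition cQ := iA (2 ^ be) (pow2_nz be) LQ phiQ phiQ_hom phiQ_per (lq (0, 1)%Z).
Definition yQ := iC (2 ^ be) (pow2_nz be) LQ phiQ phiQ_hom phiQ_per (cmk (2 ^ be) (pow2_nz be) 1).

Definition iAQ := iA (2 ^ be) (pow2_nz be) LQ phiQ phiQ_hom phiQ_per.
Definition iCQ := iC (2 ^ be) (pow2_nz be) LQ phiQ phiQ_hom phiQ_per.
Definition cq (j : nat) : Cyc (2 ^ be) (pow2_nz be) := cmk (2 ^ be) (pow2_nz be) j.
Lemma iAQ_hom : is_hom iAQ. Proof. apply iA_hom. Qed.
Lemma iCQ_hom : is_hom iCQ. Proof. apply iC_hom. Qed.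
Lemma lq_one : (gone : LQ) = lq (0, 0)%Z. Proof. reflexivity. Qed.
Lemma iAQ_one : iAQ gone = gone. Proof. reflexivity. Qed.
Lemma iCQ_one : iCQ gone = gone. Proof. reflexivity. Qed.
Lemma lq_inv u : ginv (lq u) = lq (lopp u).
Proof. apply lmk_inv. Qed.
Lemma cval_cq1 : cval (2 ^ be) (pow2_nz be) (cq 1) = 1.
Proof.
  unfold cq. rewrite cval_mk. apply Nat.mod_small.
  assert (2 ^ 1 < 2 ^ be) by (apply Nat.pow_lt_mono_r; lia). simpl in H. lia.
Qed.

Lemma Q_comm_xy : comm xQ yQ = cQ.
Proof.
  unfold xQ, yQ, cQ. rewrite sd_comm_AC. fold (cq 1). rewrite cval_cq1.
  fold iAQ. f_equal. change (ph LQ phiQ 1 (lq (1, 0)%Z)) with (ph LQ phiQ 1 (lq (1, 0)%Z)).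
  rewrite phQ, lq_inv, lq_mul. apply lq_eq. exists 0%Z, 0%Z. simpl. lia.
Qed.

Lemma Q_rels : rels al be ga si xQ yQ.
Proof.
  unfold rels. rewrite Q_comm_xy. split; [|split; [|split; [|split]]].
  - unfold xQ. fold iAQ. rewrite <- (hom_pow _ iAQ_hom). unfold lq. rewrite lat_pow. fold lq.
    rewrite <- iAQ_one, lq_one. f_equal. apply lq_eq. exists DZ, 1%Z. cbn [fst snd]. rewrite al_N, PZ_M. split; ring.
  - unfold yQ. fold iCQ. rewrite <- (hom_pow _ iCQ_hom).
    rewrite cyc_pow, <- iCQ_one. f_equal. apply cyc_eq. rewrite cval_mk, cval_one.
    rewrite Nat.mul_1_r. apply Nat.Div0.mod_same.
  - unfold cQ, xQ. fold iAQ. rewrite <- (hom_comm _ iAQ_hom). 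
    rewrite <- iAQ_one. f_equal. apply comm_1. apply lat_comm.
  - unfold cQ, yQ. rewrite sd_comm_AC. fold (cq 1). rewrite cval_cq1. fold iAQ. rewrite <- iAQ_one.
    f_equal. rewrite phQ, lq_inv, lq_mul, lq_one. apply lq_eq. exists 0%Z, 0%Z. unfold ladd, lopp; cbn [fst snd]. split; ring.
  - unfold xQ, cQ. fold iAQ. rewrite <- !(hom_pow _ iAQ_hom). f_equal. unfold lq. rewrite !lat_pow.
    apply lmk_eq. exists 1%Z, 0%Z. cbn [fst snd]. fold NZ MZ. split; ring.
Qed.
Variable G : Grp.
Variables a b : G.
Hypothesis Hpres : presents al be ga si G a b.

Let c := comm a b.
Lemma Hrels : rels al be ga si a b. Proof. apply Hpres. Qed.
Lemma c_a : commute c a. Proof. apply comm_1. apply Hrels. Qed.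
Lemma c_b : commute c b. Proof. apply comm_1. apply Hrels. Qed.
Lemma b_ord : gpow b (2 ^ be) = gone. Proof. apply Hrels. Qed.
Lemma a_ord : gpow a (2 ^ al) = gone. Proof. apply Hrels. Qed.
Lemma a_N : gpow a (2 ^ (al + si - ga)) = gpow c (2 ^ si). Proof. apply Hrels. Qed.
Lemma c_ord : gpow c (2 ^ ga) = gone.
Proof.
  replace (2 ^ ga) with (2 ^ si * 2 ^ (ga - si)) by (rewrite <- Nat.pow_add_r; f_equal; lia).
  rewrite gpow_mul, <- a_N, <- gpow_mul, <- Nat.pow_add_r.
  replace (al + si - ga + (ga - si)) with al by lia. apply a_ord.
Qed.

Lemma c_apow' m i : commute (gpow c m) (gpow a i).
Proof. exact (cpow_a a b c_a m i). Qed.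

Lemma NF_nat x y :
  gpow a (x mod 2 ^ (al + si - ga)) ** gpow c ((y + x / 2 ^ (al + si - ga) * 2 ^ si) mod 2 ^ ga) =
  gpow a x ** gpow c y.
Proof.
  rewrite <- (gpow_mod c (2 ^ ga)) by (apply pow2_nz || apply c_ord).
  rewrite (Nat.div_mod x (2 ^ (al + si - ga))) at 3 by apply pow2_nz.
  rewrite (gpow_add a), (gpow_mul a), a_N, <- gpow_mul.
  rewrite (Nat.add_comm y), (gpow_add c), (Nat.mul_comm (2 ^ si)).
  rewrite mulA, (c_apow' _ (x mod _)). reflexivity.
Qed.
Definition lvq := lv.
Lemma lv_nat (w : LQ) : exists i k, lvq w = (Z.of_nat i, Z.of_nat k).
Proof.
  pose proof (lval_nonneg _ _ _ _ _ w) as [H1 H2].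
  exists (Z.to_nat (fst (lvq w))), (Z.to_nat (snd (lvq w))).
  rewrite !Z2Nat.id by auto. destruct (lvq w); reflexivity.
Qed.

Definition gmap (q : Q) : G :=
  gpow b (cval _ _ (fst q)) ** gpow a (Z.to_nat (fst (lvq (snd q)))) ** gpow c (Z.to_nat (snd (lvq (snd q)))).

Lemma NF_lq i k : gpow a (Z.to_nat (fst (lvq (lq (Z.of_nat i, Z.of_nat k))))) **
    gpow c (Z.to_nat (snd (lvq (lq (Z.of_nat i, Z.of_nat k))))) = gpow a i ** gpow c k.
Proof.
  unfold lvq, lv, lq. rewrite lval_mk. unfold lnorm. cbn [fst snd]. unfold NZ, MZ, PZ.
  rewrite <- Nat2Z.inj_mod, <- Nat2Z.inj_div, <- Nat2Z.inj_mul, <- Nat2Z.inj_add, <- Nat2Z.inj_mod.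
  rewrite !Nat2Z.id. apply NF_nat.
Qed.

Lemma gmap_hom : is_hom gmap.
Proof.
  intros [g w] [g' w'].
  destruct (lv_nat w) as (i & k & Hw). destruct (lv_nat w') as (i' & k' & Hw').
  assert (E : ph LQ phiQ (cval _ _ g') w ** w' =
     lq (Z.of_nat (i + i'), Z.of_nat (k + cval _ _ g' * i + k'))).
  { rewrite <- (lq_val w), <- (lq_val w'). fold lvq. rewrite Hw, Hw', phQ, lq_mul. apply lq_eq.
    exists 0%Z, 0%Z. unfold ladd; cbn [fst snd]. rewrite !Nat2Z.inj_add, Nat2Z.inj_mul. split; ring. }
  rewrite sd_mul_def. unfold gmap. cbn [fst snd].
  rewrite E, <- (mulA (gpow b _) (gpow a _) (gpow c _)), NF_lq, Hw, Hw'. cbn [fst snd].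
  rewrite !Nat2Z.id. assoc_l.
  transitivity (gpow b (cval _ _ g + cval _ _ g') ** gpow a (i + i') ** gpow c (i * cval _ _ g' + k + k')).
  - rewrite cval_mul, <- gpow_mod by (apply pow2_nz || apply b_ord). f_equal. f_equal. lia.
  - rewrite <- (NF_mul a b c_a c_b). assoc_l. reflexivity.
Qed.
Lemma gmap_xQ : gmap xQ = a.
Proof.
  unfold gmap, xQ, iA. cbn [fst snd]. rewrite cval_one.
  change (lq (1, 0)%Z) with (lq (Z.of_nat 1, Z.of_nat 0)). rewrite <- mulA, NF_lq.
  simpl. rewrite !mul1l, !mul1r. reflexivity.
Qed.
Lemma gmap_yQ : gmap yQ = b.
Proof.
  unfold gmap, yQ, iC. cbn [fst snd]. fold (cq 1). rewrite cval_cq1.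
  change (gone : LQ) with (lq (Z.of_nat 0, Z.of_nat 0)). rewrite <- mulA, NF_lq.
  simpl. rewrite !mul1l, !mul1r. reflexivity.
Qed.

Variable h : G -> Q.
Hypothesis Hh : is_hom h.
Hypothesis Hha : h a = xQ.
Hypothesis Hhb : h b = yQ.

Lemma gmap_h z : gmap (h z) = z.
Proof.
  destruct Hpres as [_ Hu]. destruct (Hu G a b Hrels) as (f0 & Hf0 & _ & _ & Huniq).
  rewrite (Huniq (fun z => gmap (h z))), (Huniq (fun z => z)); auto.
  - intros x y. reflexivity.
  - intros x y. simpl. rewrite Hh. apply gmap_hom.
  - simpl. rewrite Hha. apply gmap_xQ.
  - simpl. rewrite Hhb. apply gmap_yQ.
Qed.
Lemma h_c : h c = cQ.
Proof. unfold c. rewrite (hom_comm _ Hh), Hha, Hhb. apply Q_comm_xy. Qed.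

Lemma h_gmap q : h (gmap q) = q.
Proof.
  destruct q as [g w]. destruct (lv_nat w) as (i & k & Hw).
  unfold gmap. cbn [fst snd]. fold lvq. rewrite Hw. cbn [fst snd]. rewrite !Nat2Z.id.
  rewrite !Hh, !(hom_pow _ Hh), Hha, Hhb, h_c.
  unfold xQ, yQ, cQ. fold iAQ iCQ.
  rewrite <- !(hom_pow _ iAQ_hom), <- (hom_pow _ iCQ_hom).
  rewrite <- mulA, <- iAQ_hom. unfold iCQ, iAQ. rewrite sd_CA. f_equal.
  - rewrite cyc_pow. apply cyc_eq. rewrite cval_mk.
    rewrite Nat.mul_1_r. apply Nat.mod_small, cval_lt.
  - unfold lq. rewrite !lat_pow. fold lq. rewrite lq_mul. rewrite <- (lq_val w). fold lvq. rewrite Hw.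
    apply lq_eq. exists 0%Z, 0%Z. cbn [fst snd]. unfold ladd. cbn [fst snd]. split; ring.
Qed.

Lemma gmap_inj q : gmap q = gone -> q = gone.
Proof. intro H. rewrite <- (h_gmap q), H. apply (hom_one _ Hh). Qed.

Lemma G_nf z : exists j i k, z = gpow b j ** gpow a i ** gpow c k.
Proof. rewrite <- (gmap_h z). unfold gmap. eauto. Qed.

Lemma b_nontriv : gpow b (2 ^ (be - 1)) <> gone.
Proof.
  intro H. apply (f_equal h) in H. rewrite (hom_pow _ Hh), Hhb, (hom_one _ Hh) in H.
  unfold yQ in H. fold iCQ in H. rewrite <- (hom_pow _ iCQ_hom) in H.
  apply (f_equal fst) in H. unfold iCQ, iC in H. cbn [fst] in H.
  rewrite cyc_pow in H.
  apply (f_equal (cval _ _)) in H. rewrite cval_mk, cval_one, Nat.mul_1_r in H.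
  rewrite Nat.mod_small in H. apply (pow2_nz (be - 1)); auto.
  apply Nat.pow_lt_mono_r; lia.
Qed.

Lemma c_nontriv : gpow c (2 ^ (ga - 1)) <> gone.
Proof.
  intro H. apply (f_equal h) in H. rewrite (hom_pow _ Hh), h_c, (hom_one _ Hh) in H.
  unfold cQ in H. fold iAQ in H. rewrite <- (hom_pow _ iAQ_hom) in H.
  apply (f_equal snd) in H. unfold iAQ, iA in H. cbn [snd] in H.
  unfold lq in H. rewrite lat_pow in H. apply lmk_eq_inv in H.
  destruct H as (s & t & H1 & H2). cbn [fst snd] in H1, H2.
  assert (HN : (0 < NZ)%Z) by exact HNQ. assert (s = 0)%Z by nia. subst s.
  assert (E : PZ = (2 * Z.of_nat (2 ^ (ga - 1)))%Z).
  { unfold PZ. replace ga with (S (ga - 1)) at 1 by lia. rewrite Nat.pow_succ_r'. lia. }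
  pose proof (pow2_posZ (ga - 1)). rewrite E in H2.
  set (X := Z.of_nat (2 ^ (ga - 1))) in *.
  assert (E2 : (X * (1 - 2 * t) = 0)%Z) by lia.
  apply Z.mul_eq_0 in E2. lia.
Qed.
Lemma necessity : capable G -> al = be /\ ga < be - 1.
Proof.
  intros (K & f & Hf & Hsurj & Hker).
  destruct (Hsurj a) as [x Hx]. destruct (Hsurj b) as [y Hy].
  assert (Hfz : f (comm x y) = c) by (rewrite (hom_comm _ Hf), Hx, Hy; reflexivity).
  assert (cen : forall w, f w = gone -> central w) by (intros; apply Hker; auto).
  assert (cen' : forall w, central w -> f w = gone) by (intros; apply Hker; auto).
  pose proof Hrels as (R1 & R2 & R3 & R4 & R5).
  assert (Ht : central (comm (comm x y) x)).
  { apply cen. rewrite (hom_comm _ Hf), Hfz, Hx. exact R3. }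
  assert (Hs : central (comm (comm x y) y)).
  { apply cen. rewrite (hom_comm _ Hf), Hfz, Hy. exact R4. }
  set (z := comm x y) in *. set (t := comm z x) in *. set (s := comm z y) in *.
  assert (Lc : forall v w g, f v = f w -> comm v g = comm w g).
  { intros v w g E. assert (Hk : central (ginv w ** v)).
    { apply cen. rewrite Hf, (hom_inv _ Hf), E. apply mulVl. }
    rewrite <- (mulKr w v), comm_mul_central by exact Hk. reflexivity. }
  assert (gen : forall w, commute w x -> commute w y -> central w).
  { intros w Hwx Hwy hh. destruct (G_nf (f hh)) as (j & i & k & E).
    set (q := gpow y j ** gpow x i ** gpow z k).
    assert (Hq : f q = f hh) by (unfold q; rewrite !Hf, !(hom_pow _ Hf), Hx, Hy, Hfz; auto).
    assert (Hk : central (ginv q ** hh)).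
    { apply cen. rewrite Hf, (hom_inv _ Hf), Hq. apply mulVl. }
    rewrite <- (mulKr q hh). apply commute_mul.
    - unfold q. assert (Hwz : commute w z).
      { unfold z, comm. repeat apply commute_mul; auto using commute_inv. }
      repeat apply commute_mul; apply commute_pow; auto.
    - apply commute_sym, Hk. }
  set (Nn := 2 ^ (al + si - ga)) in *. set (Mn := 2 ^ si) in *.
  assert (HtM : gpow t Mn = gone).
  { rewrite <- (F1 x y Ht). fold z. rewrite <- (Lc (gpow x Nn)).
    - apply comm_1, commute_sym, commute_pow, commute_refl.
    - rewrite !(hom_pow _ Hf), Hx, Hfz. exact R5. }
  assert (E1 : gpow z Nn = gpow s Mn).
  { rewrite <- (F2 x y Hs). fold z s. rewrite <- (Lc (gpow x Nn)).
    - rewrite (F3 x y Ht). fold z t. rewrite (gpow_dvd_one t Mn (tri Nn)), mul1r; auto.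
      unfold Nn, Mn. rewrite tri_pow2 by lia. apply pow_dvd_mul. lia.
    - rewrite !(hom_pow _ Hf), Hx, Hfz. exact R5. }
  assert (HsP : gpow s (2 ^ ga) = gone).
  { rewrite <- (F2 x y Hs). fold z s. apply comm_1.
    apply cen. rewrite (hom_pow _ Hf), Hfz. apply c_ord. }
  assert (NT : gpow s (2 ^ (ga - 1)) <> gone).
  { intro Hs1. apply c_nontriv. rewrite <- Hfz, <- (hom_pow _ Hf). apply cen'. apply gen.
    - apply comm_1. rewrite (F1 x y Ht). fold z t. apply (gpow_dvd_one t Mn); auto.
      apply pow_dvd. lia.
    - apply comm_1. rewrite (F2 x y Hs). exact Hs1. }
  assert (ND : Nn * 2 ^ (ga - si) = 2 ^ al).
  { unfold Nn. rewrite <- Nat.pow_add_r. f_equal. lia. }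
  assert (ND' : Nn * 2 ^ (ga - si - 1) = 2 ^ (al - 1)).
  { unfold Nn. rewrite <- Nat.pow_add_r. f_equal. lia. }
  assert (MD' : Mn * 2 ^ (ga - si - 1) = 2 ^ (ga - 1)).
  { unfold Mn. rewrite <- Nat.pow_add_r. f_equal. lia. }
  assert (MD : Mn * 2 ^ (ga - si) = 2 ^ ga).
  { unfold Mn. rewrite <- Nat.pow_add_r. f_equal. lia. }
  assert (Ehalf : gpow z (2 ^ (al - 1)) = gpow s (2 ^ (ga - 1))).
  { rewrite <- ND', <- MD', !gpow_mul, E1. reflexivity. }
  assert (Efull : gpow z (2 ^ al) = gone).
  { rewrite <- ND, <- HsP, <- MD, !gpow_mul, E1. reflexivity. }
  destruct (Nat.lt_trichotomy al be) as [Hlt | [Heq | Hgt]].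
  - exfalso. apply b_nontriv.
    apply (gpow_dvd_one b (2 ^ al)); [| apply pow_dvd; lia].
    rewrite <- Hy, <- (hom_pow _ Hf). apply cen'. apply gen.
    + apply commute_sym, comm_1. rewrite (F4 x y Hs). fold z s. rewrite Efull, mul1l.
      apply (gpow_dvd_one s (2 ^ ga)); auto. rewrite tri_pow2 by lia. apply pow_dvd_mul. lia.
    + apply commute_sym, commute_pow, commute_refl.
  - split; auto. destruct (Nat.lt_ge_cases ga (be - 1)) as [H|H]; auto. exfalso.
    assert (Hga : ga = be - 1) by lia.
    apply b_nontriv. rewrite <- Hga.
    rewrite <- Hy, <- (hom_pow _ Hf). apply cen'. apply gen.
    + apply commute_sym, comm_1. rewrite (F4 x y Hs). fold z s.
      replace (2 ^ ga) with (2 ^ (al - 1)) at 1 by (f_equal; lia). rewrite Ehalf, <- gpow_add.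
      apply (gpow_dvd_one s (2 ^ ga)); auto. rewrite tri_pow2 by lia.
      exists (2 ^ (ga - 1)). pose proof (pow2_nz ga).
      destruct (2 ^ ga) as [|P']; [lia|]. nia.
    + apply commute_sym, commute_pow, commute_refl.
  - exfalso. apply NT. rewrite <- Ehalf.
    assert (Hzb : gpow z (2 ^ be) = gone).
    { assert (Hc : comm x (gpow y (2 ^ be)) = gone).
      { apply comm_1, commute_sym, cen. rewrite (hom_pow _ Hf), Hy. exact R2. }
      rewrite (F4 x y Hs) in Hc. fold z s in Hc.
      rewrite (gpow_dvd_one s (2 ^ ga) (tri (2 ^ be))), mul1r in Hc; auto.
      rewrite tri_pow2 by lia. apply pow_dvd_mul. lia. }
    apply (gpow_dvd_one z (2 ^ be)); auto. apply pow_dvd. lia.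
Qed.
Section Suff.
Hypothesis Hab : al = be.
Hypothesis Hgb1 : ga < be - 1.

Notation CA := (Cyc (2 ^ al) (pow2_nz al)).
Notation AK := (Prod CA LQ).
Definition ci (i : CA) : Z := Z.of_nat (cval _ _ i).
Notation AZ := (Z.of_nat (2 ^ al)).

Lemma Zof_mod x m : m <> 0 -> Z.of_nat (x mod m) = (Z.of_nat x - Z.of_nat m * Z.of_nat (x / m))%Z.
Proof. intro H. rewrite (Nat.div_mod x m H) at 2. rewrite Nat2Z.inj_add, Nat2Z.inj_mul. ring. Qed.

Lemma Rl_AN p p' q q' k1 k2 k3 : p = (p' + AZ * k1)%Z -> q = (q' + NZ * k2 + PZ * k3)%Z ->
  Rl NZ MZ PZ (p, q) (p', q').
Proof.
  intros H1 H2. exists (DZ * k1)%Z, (k1 + k2 * Z.of_nat (2 ^ (al + si - 2 * ga)) + k3)%Z. cbn [fst snd].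
  rewrite al_N in H1. rewrite NZ_P in H1, H2 |- *. rewrite PZ_M in *. split; lia.
Qed.

Definition phiK (w : AK) : AK :=
  (fst w, lq (fst (lv (snd w)) + ci (fst w), snd (lv (snd w)) + fst (lv (snd w)))%Z).

Lemma Rl_lv u : Rl NZ MZ PZ (lv (lq u)) u.
Proof. unfold lv, lq. rewrite lval_mk. apply Rl_sym, Rl_norm; apply pow2_posZ. Qed.

Lemma phiK_mk i u : phiK (i, lq u) = (i, lq (fst u + ci i, snd u + fst u)%Z).
Proof.
  unfold phiK. cbn [fst snd]. f_equal. apply lq_eq.
  destruct (Rl_lv u) as (s & t & H1 & H2). exists s, (t + s * Z.of_nat (2 ^ (al + si - 2 * ga)))%Z.
  cbn [fst snd]. rewrite NZ_P in H1 |- *. split; lia.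
Qed.

Lemma pmul_def (i i' : CA) (w w' : LQ) : @gmul AK (i, w) (i', w') = (i ** i', w ** w').
Proof. reflexivity. Qed.

Lemma ci_mul i i' : ci (i ** i') = (ci i + ci i' - AZ * Z.of_nat ((cval _ _ i + cval _ _ i') / 2 ^ al))%Z.
Proof. unfold ci. rewrite cval_mul, Zof_mod by apply pow2_nz. rewrite Nat2Z.inj_add. ring. Qed.

Lemma phiK_hom : is_hom phiK.
Proof.
  intros [i w] [i' w']. rewrite <- (lq_val w), <- (lq_val w'). rewrite pmul_def, lq_mul, !phiK_mk, pmul_def, lq_mul.
  f_equal. apply lq_eq. unfold ladd. cbn [fst snd]. rewrite ci_mul.
  eapply Rl_AN with (k1 := (- Z.of_nat ((cval _ _ i + cval _ _ i') / 2 ^ al))%Z) (k2 := 0%Z) (k3 := 0%Z); lia.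
Qed.

Lemma phK k i u : ph AK phiK k (i, lq u) =
  (i, lq (fst u + Z.of_nat k * ci i, snd u + Z.of_nat k * fst u + Z.of_nat (tri k) * ci i)%Z).
Proof.
  induction k. simpl. f_equal. apply lq_eq. exists 0%Z, 0%Z. cbn [fst snd]. lia.
  rewrite ph_S, IHk, phiK_mk. f_equal. apply lq_eq. exists 0%Z, 0%Z. cbn [fst snd tri].
  rewrite Nat2Z.inj_succ, Nat2Z.inj_add. split; ring.
Qed.

Lemma phiK_per w : Nat.iter (2 ^ be) phiK w = w.
Proof.
  destruct w as [i w]. rewrite <- (lq_val w).
  change (Nat.iter (2 ^ be) phiK (i, lq (lv w))) with (ph AK phiK (2 ^ be) (i, lq (lv w))).
  rewrite phK. f_equal. apply lq_eq. destruct (lv w) as [p q]. cbn [fst snd].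
  assert (Et : Z.of_nat (tri (2 ^ be)) = (Z.of_nat (2 ^ (be - 1 - ga) * (2 ^ be - 1)) * PZ)%Z).
  { rewrite tri_pow2 by lia. unfold PZ. rewrite <- Nat2Z.inj_mul. f_equal.
    assert (E2 : 2 ^ (be - 1) = 2 ^ (be - 1 - ga) * 2 ^ ga) by (rewrite <- Nat.pow_add_r; f_equal; lia).
    rewrite E2. generalize (2 ^ be - 1). intro. ring. }
  eapply Rl_AN with (k1 := ci i) (k2 := 0%Z)
    (k3 := (Z.of_nat (2 ^ (be - ga)) * p + Z.of_nat (2 ^ (be - 1 - ga) * (2 ^ be - 1)) * ci i)%Z).
  - rewrite Hab. ring.
  - rewrite Et, be_P. ring.
Qed.

Notation K := (SD (2 ^ be) (pow2_nz be) AK phiK phiK_hom phiK_per).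

Definition rho (w : AK) : LQ := lq (ci (fst w), fst (lv (snd w))).
Lemma fst_lv_lq u : fst (lv (lq u)) = (fst u mod NZ)%Z.
Proof. reflexivity. Qed.
Lemma Zmod_eq' x : (x mod NZ = x - NZ * (x / NZ))%Z.
Proof. apply Z.mod_eq. pose proof HNQ as H. unfold NZ. lia. Qed.

Lemma rho_hom : is_hom rho.
Proof.
  intros [i w] [i' w']. rewrite <- (lq_val w), <- (lq_val w'), pmul_def, lq_mul. unfold rho.
  cbn [fst snd]. rewrite lq_mul. apply lq_eq. unfold ladd. cbn [fst snd]. rewrite !fst_lv_lq.
  rewrite ci_mul. cbn [fst snd].
  set (u1 := fst (lv w)). set (u1' := fst (lv w')).
  eapply Rl_AN with (k1 := (- Z.of_nat ((cval _ _ i + cval _ _ i') / 2 ^ al))%Z)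
    (k2 := (u1 / NZ + u1' / NZ - (u1 + u1') / NZ)%Z) (k3 := 0%Z).
  - lia.
  - rewrite !Zmod_eq'. ring.
Qed.

Lemma rho_comm w : rho (phiK w) = phiQ (rho w).
Proof.
  destruct w as [i w]. rewrite <- (lq_val w), phiK_mk. unfold rho. cbn [fst snd].
  rewrite phiQ_mk. cbn [fst snd]. apply lq_eq. rewrite !fst_lv_lq. cbn [fst snd].
  set (u1 := fst (lv w)).
  eapply Rl_AN with (k1 := 0%Z) (k2 := (u1 / NZ - (u1 + ci i) / NZ)%Z) (k3 := 0%Z).
  - lia.
  - rewrite !Zmod_eq'. ring.
Qed.

Definition piK : K -> Q := sdmap (2 ^ be) (pow2_nz be) AK LQ phiK phiQ phiK_hom phiK_per
  phiQ_hom phiQ_per rho.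
Lemma piK_hom : is_hom piK.
Proof. apply sdmap_hom. apply rho_hom. apply rho_comm. Qed.

Definition FK (k : K) : G := gmap (piK k).
Lemma FK_hom : is_hom FK.
Proof. intros u v. unfold FK. rewrite piK_hom. apply gmap_hom. Qed.

Lemma FK_surj z : exists k : K, FK k = z.
Proof.
  destruct (h z) as [g w] eqn:Ez. destruct (lv_nat w) as (p1 & p2 & Hw).
  exists (g, (cmk (2 ^ al) (pow2_nz al) p1, lq (Z.of_nat p2, 0%Z))).
  unfold FK. rewrite <- (gmap_h z), Ez. f_equal. unfold piK, sdmap. cbn [fst snd]. f_equal.
  unfold rho. cbn [fst snd]. rewrite <- (lq_val w). fold lvq. rewrite Hw. apply lq_eq.
  rewrite fst_lv_lq. cbn [fst snd]. unfold ci. rewrite cval_mk, Zof_mod by apply pow2_nz.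
  eapply Rl_AN with (k1 := (- Z.of_nat (p1 / 2 ^ al))%Z) (k2 := (- (Z.of_nat p2 / NZ))%Z) (k3 := 0%Z).
  - lia.
  - rewrite Zmod_eq'. ring.
Qed.

Lemma AK_comm (u v : AK) : u ** v = v ** u.
Proof. destruct u as [i w], v as [i' w']. rewrite !pmul_def. f_equal. apply cyc_comm. apply lat_comm. Qed.

Lemma ph_fix (w : AK) k : phiK w = w -> ph AK phiK k w = w.
Proof. intro H. induction k. reflexivity. rewrite ph_S, IHk. exact H. Qed.

Lemma tri_2Z g : (2 * Z.of_nat (tri g) = Z.of_nat g * (Z.of_nat g - 1))%Z.
Proof.
  destruct g. reflexivity. rewrite <- (Nat2Z.inj_mul 2), tri_2, Nat2Z.inj_mul, Nat2Z.inj_sub by lia.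
  reflexivity.
Qed.

Lemma ci_1 : ci (cmk (2 ^ al) (pow2_nz al) 1) = 1%Z.
Proof.
  unfold ci. rewrite cval_mk, Nat.mod_small. reflexivity.
  assert (2 ^ 1 < 2 ^ al) by (apply Nat.pow_lt_mono_r; lia). simpl in H. lia.
Qed.

Lemma NT_K g : g < 2 ^ be -> Rl NZ MZ PZ (Z.of_nat g, Z.of_nat (tri g)) (0, 0)%Z -> g = 0.
Proof.
  intros Hlt (s & t & H1 & H2). cbn [fst snd] in H1, H2.
  assert (Hg : Z.of_nat g = 0%Z); [|lia].
  assert (HM : (0 < MZ)%Z) by apply pow2_posZ.
  assert (HD : (0 < DZ)%Z) by apply pow2_posZ.
  assert (Hr : (0 <= Z.of_nat g < AZ)%Z) by (rewrite Hab; lia).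
  destruct (Nat.eq_dec (al + si) (2 * ga)) as [Heq | Hne].
  - apply (NT_case2 MZ DZ (Z.of_nat (2 ^ (ga - si - 2))) NZ PZ AZ s t (Z.of_nat g) (Z.of_nat (tri g))).
    + exact HM.
    + apply pow2_posZ.
    + unfold DZ. rewrite <- (Nat2Z.inj_mul 4). f_equal.
      change 4 with (2 ^ 2). rewrite <- Nat.pow_add_r. f_equal. lia.
    + apply PZ_M.
    + unfold NZ, PZ. f_equal. f_equal. lia.
    + apply al_N.
    + lia.
    + apply tri_2Z.
    + lia.
    + lia.
    + intros s0 u0 Hu Hd. apply (pow2_div_odd _ s0 u0 Hu Hd).
  - apply (NT_case1 MZ DZ (Z.of_nat (2 ^ (al + si - 2 * ga - 1))) NZ PZ AZ s t (Z.of_nat g) (Z.of_nat (tri g))).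
    + exact HM.
    + exact HD.
    + apply PZ_M.
    + rewrite NZ_P. f_equal. rewrite <- (Nat2Z.inj_mul 2). f_equal.
      rewrite <- Nat.pow_succ_r'. f_equal. lia.
    + apply al_N.
    + lia.
    + apply tri_2Z.
    + lia.
    + lia.
Qed.

Lemma K_central (k : K) : central k <-> (fst k = gone /\ rho (snd k) = gone).
Proof.
  destruct k as [g [i w]]. cbn [fst snd]. split.
  - intro Hc.
    assert (Hfix : phiK (i, w) = (i, w)).
    { pose proof (Hc (cq 1, gone)) as H1. rewrite !sd_mul_def in H1. apply (f_equal snd) in H1.
      cbn [snd] in H1. rewrite mul1r, (ph_one _ _ phiK_hom), mul1l, cval_cq1 in H1. exact H1. }
    split.
    + assert (Hx : (cmk (2 ^ al) (pow2_nz al) 1, gone) = ph AK phiK (cval _ _ g) (cmk (2 ^ al) (pow2_nz al) 1, gone)).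
      { pose proof (Hc (gone, (cmk (2 ^ al) (pow2_nz al) 1, gone))) as H2. rewrite !sd_mul_def in H2.
        apply (f_equal snd) in H2. cbn [snd] in H2. rewrite cval_one, ph_0 in H2.
        rewrite AK_comm in H2. apply mul_cancel_r in H2. exact H2. }
      rewrite lq_one, phK, ci_1 in Hx. apply (f_equal snd) in Hx. cbn [snd fst] in Hx.
      unfold lq in Hx. apply lmk_eq_inv in Hx. destruct Hx as (s & t & H1 & H2). cbn [fst snd] in H1, H2.
      assert (E : cval _ _ g = 0).
      { apply NT_K. apply cval_lt.
        exists (- s)%Z, (- t)%Z. cbn [fst snd]. lia. }
      apply cyc_eq. rewrite E, cval_one. reflexivity.
    + rewrite <- (lq_val w), phiK_mk in Hfix. apply (f_equal snd) in Hfix. cbn [snd] in Hfix.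
      unfold lq in Hfix. apply lmk_eq_inv in Hfix. destruct Hfix as (s & t & H1 & H2).
      cbn [fst snd] in H1, H2. unfold rho. cbn [fst snd]. rewrite lq_one. apply lq_eq.
      exists s, t. cbn [fst snd]. fold lvq in *. unfold lvq in *. lia.
  - intros [Hg Hr] [g' w']. subst g.
    assert (Hfix : phiK (i, w) = (i, w)).
    { unfold rho in Hr. cbn [fst snd] in Hr. rewrite lq_one in Hr. unfold lq in Hr.
      apply lmk_eq_inv in Hr. destruct Hr as (s & t & H1 & H2). cbn [fst snd] in H1, H2.
      rewrite <- (lq_val w). rewrite phiK_mk. f_equal. apply lq_eq.
      exists s, t. cbn [fst snd]. fold lvq in *. unfold lvq in *. lia. }
    rewrite !sd_mul_def. f_equal.
    + rewrite mul1l, mul1r. reflexivity.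
    + rewrite ph_fix by exact Hfix. rewrite cval_one, ph_0. apply AK_comm.
Qed.

Lemma FK_ker k : FK k = gone <-> central k.
Proof.
  rewrite K_central. split.
  - intro H. apply gmap_inj in H. split; [apply (f_equal fst) in H | apply (f_equal snd) in H]; exact H.
  - intros [H1 H2]. unfold FK. replace (piK k) with (gone : Q).
    + apply (hom_one _ gmap_hom).
    + unfold piK, sdmap. rewrite H1, H2. reflexivity.
Qed.

Lemma sufficiency : capable G.
Proof. exists K, FK. split; [apply FK_hom | split; [apply FK_surj | apply FK_ker]]. Qed.
End Suff.
End Model.

Theorem corollary6p2 (al be ga si : nat) (G : Grp) (a b : G) :
  be >= ga -> ga > si -> al + si >= 2 * ga -> al + be + si > 3 -> ga < be ->
  presents al be ga si G a b ->
  (capable G <-> (al = be /\ ga < be - 1)).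
Proof.
  intros H1 H2 H3 H4 H5 Hp.
  assert (Hsg : si < ga) by lia. assert (Hag : 2 * ga <= al + si) by lia.
  destruct (proj2 Hp _ _ _ (Q_rels al be ga si Hsg Hag H5)) as (h & Hh & Hha & Hhb & _).
  split.
  - apply (necessity al be ga si Hsg Hag H5 G a b Hp h Hh Hha Hhb).
  - intros [Hab Hgb1]. apply (sufficiency al be ga si Hsg Hag H5 G a b Hp h Hh Hha Hhb Hab Hgb1).
Qed.
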